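(* Let $\mathcal X=\{x_{n,k}\}$ be a Marcinkiewicz–Zygmund family on $\mathbb T$ with weights $\tau=\{\tau_{n,k}\}$ and constants $A,B>0$ (as in the context). Let $f\in C(\mathbb T)$, $n\in\mathbb N$, let $P_nf=\sum_{|k|\le n}\hat f(k)e^{2\pi ikx}$ be the orthogonal projection of $f$ onto $\mathcal T_n$, and let $p_n=\operatorname{argmin}_{p\in\mathcal T_n}\sum_{k=1}^{L_n}|f(x_{n,k})-p(x_{n,k})|^2\tau_{n,k}$. Then $$\|P_nf-p_n\|_2^2\le A^{-2}B\sum_{k=1}^{L_n}|f(x_{n,k})-P_nf(x_{n,k})|^2\tau_{n,k}.$$
   Context: $\mathbb T=\mathbb R/\mathbb Z$, identified with $(-1/2,1/2]$, with Lebesgue measure; $\|\cdot\|_2$ is the $L^2(\mathbb T)$-norm. $\mathcal T_n$ is the space of trigonometric polynomials $\sum_{k=-n}^n c_ke^{2\pi ikx}$; $\hat f(k)=\int_0^1 f(x)e^{-2\pi ikx}dx$. A doubly-indexed set $\mathcal X=\{x_{n,k}: n\in\mathbb N, k=1,\dots,L_n\}\subseteq\mathbb T$ with weights $\tau_{n,k}>0$ is a Marcinkiewicz–Zygmund family if there are constants $A,B>0$ independent of $n$ with $A\|p\|_2^2\le\sum_{k=1}^{L_n}|p(x_{n,k})|^2\tau_{n,k}\le B\|p\|_2^2$ for all $p\in\mathcal T_n$, $n\in\mathbb N$. *)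

(* Defs.v *)
From HB Require Import structures.
From mathcomp Require Import all_boot all_order all_algebra.
From mathcomp Require Import all_classical all_reals all_analysis.
From mathcomp Require Import complex.
Set Implicit Arguments. Unset Strict Implicit. Unset Printing Implicit Defensive.
Import Order.TTheory GRing.Theory Num.Theory.
Import numFieldNormedType.Exports.
Local Open Scope classical_set_scope.
Local Open Scope ring_scope.

Section Defs.
Variable R : realType.

Definition cabs2 (z : R[i]) : R := complex.Re z ^+ 2 + complex.Im z ^+ 2.

Definition ek (k : int) (x : R) : R[i] :=
  Complex (cos (2 * pi * k%:~R * x)) (sin (2 * pi * k%:~R * x)).

Definition cint (g : R -> R[i]) : R[i] :=
  Complex (Rintegral lebesgue_measure `[0%R, 1%R] (fun x => complex.Re (g x)))
          (Rintegral lebesgue_measure `[0%R, 1%R] (fun x => complex.Im (g x))).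

(* squared L^2(T) norm, T = R/Z with Lebesgue measure (period [0,1]) *)
Definition l2sq (g : R -> R[i]) : R :=
  Rintegral lebesgue_measure `[0%R, 1%R] (fun x => cabs2 (g x)).

Definition contT (f : R -> R[i]) : Prop :=
  continuous (fun x : R^o => complex.Re (f x) : R^o) /\
  continuous (fun x : R^o => complex.Im (f x) : R^o) /\
  (forall x, f (x + 1) = f x).

Definition fhat (f : R -> R[i]) (k : int) : R[i] :=
  cint (fun x => f x * ek (- k) x).

Definition trigpoly (n : nat) (p : R -> R[i]) : Prop :=
  exists c : int -> R[i], forall x,
    p x = \sum_(i < (2 * n).+1) c (i%:Z - n%:Z) * ek (i%:Z - n%:Z) x.

Definition Pn (n : nat) (f : R -> R[i]) (x : R) : R[i] :=
  \sum_(i < (2 * n).+1) fhat f (i%:Z - n%:Z) * ek (i%:Z - n%:Z) x.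

Definition dsum (X : nat -> nat -> R) (tau : nat -> nat -> R) (L : nat -> nat)
  (n : nat) (g : R -> R[i]) : R :=
  \sum_(1 <= k < (L n).+1) cabs2 (g (X n k)) * tau n k.

Definition MZ_family (X : nat -> nat -> R) (tau : nat -> nat -> R)
  (L : nat -> nat) (A B : R) : Prop :=
  0 < A /\ 0 < B /\
  (forall n k, (1 <= k <= L n)%N -> 0 < tau n k) /\
  (forall n p, trigpoly n p ->
     A * l2sq p <= dsum X tau L n p /\ dsum X tau L n p <= B * l2sq p).

End Defs.

(* Main.v *)
Require Import Defs.
From HB Require Import structures.
From mathcomp Require Import all_boot all_order all_algebra.
From mathcomp Require Import all_classical all_reals all_analysis.
From mathcomp Require Import complex ring lra.
Import Order.TTheory GRing.Theory Num.Theory.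
Local Open Scope ring_scope.

Lemma cabs2_lin (R : realType) (u v : R[i]) (t : R) :
  cabs2 (u - (t%:C)%C * v) = cabs2 u - 2 * t * (complex.Re u * complex.Re v + complex.Im u * complex.Im v) + t ^+ 2 * cabs2 v.
Proof. case: u => a b; case: v => c d; rewrite /cabs2 /=. ring. Qed.

Lemma cabs2_ge0 (R : realType) (u : R[i]) : 0 <= cabs2 u.
Proof. rewrite /cabs2; apply: addr_ge0; exact: sqr_ge0. Qed.

Lemma dsum_ge0 (R : realType) X tau L A B n (g : R -> R[i]) :
  MZ_family X tau L A B -> 0 <= dsum X tau L n g.
Proof.
move=> [_ [_ [ht _]]]; rewrite /dsum big_nat_cond; apply: sumr_ge0 => k /andP[/andP[k1 k2] _].
apply: mulr_ge0; first exact: cabs2_ge0.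
by apply/ltW/ht; rewrite k1 -ltnS k2.
Qed.

Lemma trig_lin (R : realType) n (p q : R -> R[i]) (t : R[i]) :
  trigpoly n p -> trigpoly n q -> trigpoly n (fun x => p x + t * (q x - p x)).
Proof.
move=> [c hc] [d hd]; exists (fun k => c k + t * (d k - c k)) => x.
rewrite hc hd -sumrB mulr_sumr -big_split /=; apply: eq_bigr => i _; ring.
Qed.

Lemma trig_Pn (R : realType) n (f : R -> R[i]) : trigpoly n (Pn n f).
Proof. by exists (fhat f). Qed.

Theorem proposition2p5 (R : realType) (X : nat -> nat -> R)
  (tau : nat -> nat -> R) (L : nat -> nat) (A B : R)
  (hMZ : MZ_family X tau L A B)
  (f : R -> R[i]) (hf : contT f) (n : nat) (pn : R -> R[i])
  (hpn : trigpoly n pn)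
  (hmin : forall p, trigpoly n p ->
     dsum X tau L n (fun x => f x - pn x) <= dsum X tau L n (fun x => f x - p x)) :
  l2sq (fun x => Pn n f x - pn x)
    <= A ^- 2 * B * dsum X tau L n (fun x => f x - Pn n f x).
Proof.
set g := fun x => f x - pn x.
set h := fun x => Pn n f x - pn x.
set S := \sum_(1 <= k < (L n).+1)
   (complex.Re (g (X n k)) * complex.Re (h (X n k)) +
    complex.Im (g (X n k)) * complex.Im (h (X n k))) * tau n k.
have quad : forall t : R, dsum X tau L n (fun x => f x - (pn x + (t%:C)%C * (Pn n f x - pn x)))
   = dsum X tau L n g - 2 * t * S + t ^+ 2 * dsum X tau L n h.
  move=> t; rewrite /dsum /S mulr_sumr mulr_sumr -sumrB -big_split /=.
  apply: eq_bigr => k _.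
  have -> : f (X n k) - (pn (X n k) + (t%:C)%C * (Pn n f (X n k) - pn (X n k)))
     = g (X n k) - (t%:C)%C * h (X n k) by rewrite /g /h; ring.
  rewrite cabs2_lin; ring.
have hq : forall t : R, 0 <= - 2 * t * S + t ^+ 2 * dsum X tau L n h.
  move=> t; have := hmin _ ((@trig_lin R n _ _ ((t%:C)%C) hpn (trig_Pn R n f))).
  rewrite quad -/g; lra.
set H := dsum X tau L n h.
have H0 : 0 <= H by exact: (dsum_ge0 _ _ _ _ _ _ _ _ hMZ).
have S0 : S = 0.
  have := hq (S / (H + 1)); set u := S / (H + 1) => hu.
  have Su : S = u * (H + 1) by rewrite /u divfK // gt_eqF // ltr_wpDl.
  have e : - 2 * u * S + u ^+ 2 * H = - (u ^+ 2 * (H + 2)) by rewrite Su; ring.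
  rewrite e oppr_ge0 in hu.
  have hu2 : u ^+ 2 <= 0.
    by rewrite -(pmulr_lle0 _ (_ : 0 < H + 2)) // ltr_wpDl.
  have : u = 0 by apply/eqP; rewrite -sqrf_eq0 eq_le hu2 sqr_ge0.
  by move=> u0; rewrite Su u0 mul0r.
have D1 : dsum X tau L n (fun x => f x - Pn n f x) = dsum X tau L n g + H.
  have := quad 1; rewrite S0 expr1n !mul1r mulr0 subr0.
  move=> <-; rewrite /dsum; apply: eq_bigr => k _; congr (cabs2 _ * _).
  have -> : (1%:C)%C = 1 :> R[i] by [].
  rewrite mul1r; ring.
have Dg := dsum_ge0 _ _ _ _ _ _ _ g hMZ.
have [hA [hB [_ hmz]]] := hMZ.
have htr : trigpoly n h.
  have [c hc] := hpn; exists (fun k => fhat f k - c k) => x.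
  rewrite /h /Pn hc -sumrB; apply: eq_bigr => i _; ring.
have [h1 h2] := hmz n h htr.
rewrite -/H in h1 h2.
rewrite D1.
set N := l2sq h in h1 h2 *.
have Dge : 0 <= dsum X tau L n g + H by apply: addr_ge0.
case: (lerP N 0) => hN.
  apply: (le_trans hN); apply: mulr_ge0 => //; apply: mulr_ge0; last exact: ltW.
  by rewrite invr_ge0 exprn_ge0 // ltW.
have AB : A <= B by nra.
have key : A ^+ 2 * N <= B * (dsum X tau L n g + H).
  rewrite expr2 -mulrA; apply: (le_trans (ler_wpM2l (ltW hA) h1)).
  have hh : H <= dsum X tau L n g + H by apply: ler_wpDl. 
  apply: (le_trans (ler_wpM2l (ltW hA) hh)).
  exact: ler_wpM2r.
rewrite -mulrA ler_pdivlMl ?exprn_gt0 //.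
Qed.
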